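(* Let $\beta\in\mathbb{F}G$ and let $\mathcal{C}_{1,\beta}$ be the corresponding $2$-quasi-abelian code over $\mathbb{F}$, with parameters $[2n,k,d_{\min}]$ (length $2n$, dimension $k$, minimum Hamming distance $d_{\min}$). Then there exists $d\in\mathcal{S}G$ with $\pi(d)=\beta$ such that $\pi(\mathfrak{C}_{1,d})=\mathcal{C}_{1,\beta}$ and $\mathfrak{C}_{1,d}$ is a $2$-quasi-abelian code over $\mathcal{S}$ with parameters $[2n,k,d_{\min}]$, i.e. of length $2n$, free over $\mathcal{S}$ of rank $k$, and of minimum Hamming distance $d_{\min}$.
   Context: Let $\mathcal{S}$ be a finite commutative chain ring with maximal ideal $\mathbf{m}$ and residue field $\mathbb{F}=\mathcal{S}/\mathbf{m}=\mathbb{F}_{q^2}$. Let $G$ be a finite abelian group of odd order $n$ with $\gcd(n,q)=1$. The map $\pi:\mathcal{S}G\to\mathbb{F}G$ reduces each coefficient modulo $\mathbf{m}$, applied componentwise on $(\mathcal{S}G)^2$. For $c,d\in\mathcal{S}G$, $\mathfrak{C}_{c,d}=\{(uc,ud):u\in\mathcal{S}G\}$, and for $a,b\in\mathbb{F}G$, $\mathcal{C}_{a,b}=\{(sa,sb):s\in\mathbb{F}G\}$. Elements of $(\mathcal{S}G)^2$ are viewed as words of length $2n$ over $\mathcal{S}$ via their coefficients; the Hamming weight counts nonzero coefficients. *)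

(* Defs.v *)
From HB Require Import structures.
From mathcomp Require Import all_boot all_order all_algebra all_fingroup.
Set Implicit Arguments. Unset Strict Implicit. Unset Printing Implicit Defensive.
Import GRing.Theory.
Local Open Scope ring_scope.

Definition is_ideal (R : finComUnitRingType) (I : {set R}) : Prop :=
  0 \in I /\ (forall x y, x \in I -> y \in I -> x + y \in I) /\
  (forall r x, x \in I -> r * x \in I).

Definition chain_ring (R : finComUnitRingType) : Prop :=
  forall I J : {set R}, is_ideal I -> is_ideal J -> I \subset J \/ J \subset I.

Definition maximal_ideal (R : finComUnitRingType) (I : {set R}) : Prop :=
  is_ideal I /\ I != [set: R] /\
  forall J : {set R}, is_ideal J -> I \subset J -> J = I \/ J = [set: R].

Definition gconv (gT : finGroupType) (R : comNzRingType) (u c : {ffun gT -> R})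
  : {ffun gT -> R} :=
  [ffun g => \sum_(h : gT) u h * c ((h^-1 * g)%g)].

Definition gone (gT : finGroupType) (R : comNzRingType) : {ffun gT -> R} :=
  [ffun g => if g == 1%g then 1 else 0].

(* pairs (elements of (R G)^2), viewed as words of length 2|G| *)
Definition word (gT : finGroupType) (R : Type) :=
  ({ffun gT -> R} * {ffun gT -> R})%type.

Definition qa_code (gT : finGroupType) (R : comNzRingType) (c d : {ffun gT -> R})
  (w : word gT R) : Prop :=
  exists u : {ffun gT -> R}, w = (gconv u c, gconv u d).

Definition hdist (gT : finGroupType) (R : eqType) (w v : word gT R) : nat :=
  #|[set g : gT | w.1 g != v.1 g]| + #|[set g : gT | w.2 g != v.2 g]|.

Definition min_dist (gT : finGroupType) (R : eqType) (C : word gT R -> Prop)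
  (dm : nat) : Prop :=
  (exists w v, [/\ C w, C v, w <> v & hdist w v = dm]) /\
  (forall w v, C w -> C v -> w <> v -> (dm <= hdist w v)%N).

Definition lincomb (gT : finGroupType) (R : comNzRingType) (k : nat)
  (c : {ffun 'I_k -> R}) (b : 'I_k -> word gT R) : word gT R :=
  ([ffun g => \sum_(i < k) c i * (b i).1 g], [ffun g => \sum_(i < k) c i * (b i).2 g]).

Definition free_of_rank (gT : finGroupType) (R : comNzRingType)
  (C : word gT R -> Prop) (k : nat) : Prop :=
  exists b : 'I_k -> word gT R, (forall i, C (b i)) /\
    forall w, C w -> exists! c : {ffun 'I_k -> R}, lincomb c b = w.

Definition redw (gT : finGroupType) (S F : Type) (f : S -> F) (w : word gT S) : word gT F :=
  ([ffun g => f (w.1 g)], [ffun g => f (w.2 g)]).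

(* Main.v *)
Require Import Defs.
From HB Require Import structures.
From mathcomp Require Import all_boot all_order all_algebra all_fingroup.
Local Open Scope ring_scope.
Import GRing.Theory.


Definition wt {gT : finGroupType} {R : comNzRingType} (f : {ffun gT -> R}) := #|[set g | f g != 0]|.
Definition subf {gT : finGroupType} {R : comNzRingType} (a b : {ffun gT -> R}) : {ffun gT -> R} :=
  [ffun g => a g - b g].
Definition zf (gT : finGroupType) (R : comNzRingType) : {ffun gT -> R} := [ffun _ => 0].
Definition mapf {gT : finGroupType} {R1 R2 : comNzRingType} (f : R1 -> R2) (u : {ffun gT -> R1})
  : {ffun gT -> R2} := [ffun g => f (u g)].

Lemma sum_delta {R : comNzRingType} {I : finType} (c : I -> R) (i0 : I) :
  \sum_(j : I) c j * (if j == i0 then 1 else 0) = c i0.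
Proof.
rewrite (bigD1 i0) //= eqxx mulr1 big1 ?addr0 // => j /negbTE ->; exact: mulr0.
Qed.

Lemma gconv_one (gT : finGroupType) (R : comNzRingType) (u : {ffun gT -> R}) : gconv u (gone gT R) = u.
Proof.
apply/ffunP => g; rewrite !ffunE.
rewrite -[RHS](@sum_delta _ _ (fun h => u h) g).
apply: eq_bigr => h _; by rewrite ffunE -eq_mulVg1.
Qed.

Lemma gconv_sub (gT : finGroupType) (R : comNzRingType) (a b d : {ffun gT -> R}) :
  gconv (subf a b) d = subf (gconv a d) (gconv b d).
Proof.
apply/ffunP => g; rewrite !ffunE -sumrB; apply: eq_bigr => h _; by rewrite ffunE mulrBl.
Qed.

Lemma gconv_scal (gT : finGroupType) (R : comNzRingType) (r : R) (c d : {ffun gT -> R}) g :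
  gconv [ffun h => r * c h] d g = r * gconv c d g.
Proof.
rewrite !ffunE mulr_sumr; apply: eq_bigr => h _; by rewrite ffunE mulrA.
Qed.

Lemma gconv_zero (gT : finGroupType) (R : comNzRingType) (d : {ffun gT -> R}) : gconv (zf gT R) d = zf gT R.
Proof. apply/ffunP => g; rewrite !ffunE big1 // => h _; by rewrite ffunE mul0r. Qed.

Lemma subf0 (gT : finGroupType) (R : comNzRingType) (u : {ffun gT -> R}) : subf u (zf gT R) = u.
Proof. apply/ffunP => g; by rewrite !ffunE subr0. Qed.

Lemma gconv_map (gT : finGroupType) (R1 R2 : comNzRingType) (f : {rmorphism R1 -> R2})
  (u c : {ffun gT -> R1}) :
  mapf f (gconv u c) = gconv (mapf f u) (mapf f c).
Proof.
apply/ffunP => g; rewrite !ffunE rmorph_sum; apply: eq_bigr => h _;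
by rewrite rmorphM !ffunE.
Qed.

Lemma map_gone (gT : finGroupType) (R1 R2 : comNzRingType) (f : {rmorphism R1 -> R2}) :
  mapf f (gone gT R1) = gone gT R2.
Proof.
apply/ffunP => g; rewrite !ffunE; case: (g == 1%g); [exact: rmorph1 | exact: rmorph0].
Qed.

Lemma lincomb_code (gT : finGroupType) (R : comNzRingType) k (c : {ffun 'I_k -> R})
  (b : 'I_k -> word gT R) (us : 'I_k -> {ffun gT -> R}) (a d : {ffun gT -> R}) :
  (forall i, b i = (gconv (us i) a, gconv (us i) d)) ->
  lincomb c b =
  (gconv [ffun h => \sum_(i < k) c i * us i h] a,
   gconv [ffun h => \sum_(i < k) c i * us i h] d).
Proof.
move=> Hb.
rewrite /lincomb /=; congr pair; apply/ffunP => g; rewrite !ffunE;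
  under eq_bigr do rewrite Hb /= ffunE mulr_sumr;
  rewrite exchange_big /=; apply: eq_bigr => h _; rewrite ffunE mulr_suml;
  apply: eq_bigr => i _; by rewrite mulrA.
Qed.

Lemma card_neq (gT : finGroupType) (R : comNzRingType) (a b : {ffun gT -> R}) :
  #|[set g | a g != b g]| = wt (subf a b).
Proof. rewrite /wt; apply: eq_card => g; by rewrite !inE ffunE subr_eq0. Qed.

Lemma hdist_code (gT : finGroupType) (R : comNzRingType) (u u' d : {ffun gT -> R}) :
  hdist (gconv u (gone gT R), gconv u d) (gconv u' (gone gT R), gconv u' d) =
  (wt (subf u u') + wt (gconv (subf u u') d))%N.
Proof. by rewrite /hdist /= !card_neq !gconv_one gconv_sub. Qed.


Definition pid {S : finComUnitRingType} (y : S) : {set S} :=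
  [set z | [exists t, z == t * y]].

Lemma pid_ideal {S : finComUnitRingType} (y : S) : is_ideal (pid y).
Proof.
split; [|split].
- rewrite inE; apply/existsP; exists 0; by rewrite mul0r.
- move=> a b; rewrite !inE => /existsP[s /eqP->] /existsP[t /eqP->];
  apply/existsP; exists (s + t); by rewrite mulrDl.
- move=> r a; rewrite !inE => /existsP[s /eqP->]; apply/existsP; exists (r * s);
  by rewrite mulrA.
Qed.

Lemma pid_self {S : finComUnitRingType} (y : S) : y \in pid y.
Proof. rewrite inE; apply/existsP; exists 1; by rewrite mul1r. Qed.

Lemma unit_mul_neq0 {R : comUnitRingType} {c a : R} :
  c \is a GRing.unit -> a != 0 -> c * a != 0.
Proof. move=> cu; apply: contra => /eqP H; by rewrite -(mulKr cu a) H mulr0. Qed.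

Lemma red_unit {S : finComUnitRingType} {F : finFieldType}
  {red : {rmorphism S -> F}} (hchain : chain_ring S)
  (hk : maximal_ideal [set x : S | red x == 0]) (y : S) :
  red y != 0 -> y \is a GRing.unit.
Proof.
move=> ry.
have [Hi [_ Hmax]] := hk.
case: (hchain _ _ (pid_ideal y) Hi) => [/subsetP H | H].
  by have := H y (pid_self y); rewrite inE (negbTE ry).
case: (Hmax _ (pid_ideal y) H) => [E | E].
  by have := pid_self y; rewrite E inE (negbTE ry).
have : 1 \in pid y by rewrite E inE.
rewrite inE => /existsP[t /eqP Ht]; apply/unitrP; exists t; split; first by rewrite -Ht.
by rewrite mulrC -Ht.
Qed.

Lemma socle_exists {S : finComUnitRingType} {F : finFieldType}
  {red : {rmorphism S -> F}} (hchain : chain_ring S)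
  (hk : maximal_ideal [set x : S | red x == 0]) :
  exists a : S, a != 0 /\ forall y, (a * y != 0) = (red y != 0).
Proof.
case: (@arg_minnP _ 1 (fun x : S => x != 0) (fun x : S => #|pid x|) (oner_neq0 S)) => a0 Ha0 Hmin.
exists a0; split=> // y.
case ry: (red y == 0); last first.
  rewrite /= mulrC unit_mul_neq0 //. apply: (red_unit hchain hk); by rewrite ry.
apply/negbTE; rewrite negbK; apply: contraT => Hne.
have sub : pid (a0 * y) \subset pid a0.
  apply/subsetP => z; rewrite !inE => /existsP[t /eqP->]; apply/existsP;
  exists (t * y); by rewrite -mulrA (mulrC y).
have Hle := Hmin _ Hne.
have E : pid (a0 * y) == pid a0 by rewrite eqEcard sub Hle.
have : a0 \in pid (a0 * y) by rewrite (eqP E) pid_self.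
rewrite inE => /existsP[t /eqP Ht].
have u1 : (1 - t * y) \is a GRing.unit.
  apply: (red_unit hchain hk).
  by rewrite rmorphB rmorph1 rmorphM (eqP ry) mulr0 subr0 oner_neq0.
have H : a0 * (1 - t * y) = 0 by rewrite mulrBr mulr1 mulrCA -Ht subrr.
by move: (unit_mul_neq0 u1 Ha0); rewrite mulrC H eqxx.
Qed.

Theorem theorem4p3
  (S : finComUnitRingType) (F : finFieldType) (q : nat)
  (red : {rmorphism S -> F})
  (gT : finGroupType)
  (hchain : chain_ring S)
  (hred_surj : forall y : F, exists x : S, red x = y)
  (hred_ker : maximal_ideal [set x : S | red x == 0])
  (hF : #|F| = (q ^ 2)%N)
  (hab : abelian [set: gT])
  (hodd : odd #|gT|)
  (hcop : coprime #|gT| q)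
  (beta : {ffun gT -> F}) (k dm : nat)
  (hk : free_of_rank (qa_code (gone gT F) beta) k)
  (hdm : min_dist (qa_code (gone gT F) beta) dm) :
  exists d : {ffun gT -> S},
    [/\ [ffun g => red (d g)] = beta,
        (forall w, qa_code (gone gT F) beta w <->
                   exists v, qa_code (gone gT S) d v /\ redw red v = w),
        free_of_rank (qa_code (gone gT S) d) k
      & min_dist (qa_code (gone gT S) d) dm].
Proof.
have liftP : forall y : F, exists x : S, red x == y.
  by move=> y; case: (hred_surj y) => x <-; exists x.
pose lf (y : F) := xchoose (liftP y).
have lfK y : red (lf y) = y by exact: eqP (xchooseP (liftP y)).
pose liftf (s : {ffun gT -> F}) : {ffun gT -> S} := [ffun g => lf (s g)].
have liftfK s : mapf red (liftf s) = s by apply/ffunP => g; rewrite !ffunE lfK.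
pose d := liftf beta.
have Hd : mapf red d = beta by exact: liftfK.
have redconv u : mapf red (gconv u d) = gconv (mapf red u) beta.
  by rewrite gconv_map Hd.
have Hunit := red_unit hchain hred_ker.
have [a [Ha0 Ha]] := socle_exists hchain hred_ker.
exists d; split.
- exact: Hd.
- move=> w; split.
  + case=> s ->.
    exists (gconv (liftf s) (gone gT S), gconv (liftf s) d); split.
      by exists (liftf s).
    change ((mapf red (gconv (liftf s) (gone gT S)), mapf red (gconv (liftf s) d))
      = (gconv s (gone gT F), gconv s beta)).
    by rewrite redconv !gconv_one liftfK.
  + case=> v [[u ->] <-]; exists (mapf red u).
    change ((mapf red (gconv u (gone gT S)), mapf red (gconv u d))
      = (gconv (mapf red u) (gone gT F), gconv (mapf red u) beta)).
    by rewrite redconv !gconv_one.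
- have Hk : k = #|gT|.
    case: hk => b [Hb Hu].
    have Hbc i : exists u, b i == (gconv u (gone gT F), gconv u beta).
      by case: (Hb i) => u ->; exists u.
    pose us i := xchoose (Hbc i).
    have Hbu i : b i = (gconv (us i) (gone gT F), gconv (us i) beta).
      exact: eqP (xchooseP (Hbc i)).
    pose U (c : {ffun 'I_k -> F}) : {ffun gT -> F} := [ffun h => \sum_(i < k) c i * us i h].
    have Hlin c : lincomb c b = (gconv (U c) (gone gT F), gconv (U c) beta).
      exact: lincomb_code.
    pose f (c : {ffun 'I_k -> F}) := U c.
    have f_inj : injective f.
      move=> c c' E.
      have Cw : qa_code (gone gT F) beta (lincomb c b) by exists (U c).
      case: (Hu _ Cw) => c0 [_ Huniq].
      rewrite -(Huniq c) // -(Huniq c') //.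
      by rewrite !Hlin /f in E *; rewrite E.
    pose h (s : {ffun gT -> F}) := odflt [ffun _ => 0] [pick c | f c == s].
    have hK : cancel h f.
      move=> s; rewrite /h; case: pickP => [c /eqP // | H0].
      have Cw : qa_code (gone gT F) beta (gconv s (gone gT F), gconv s beta) by exists s.
      case: (Hu _ Cw) => c0 [Hc0 _].
      have : f c0 == s.
        move: Hc0; rewrite Hlin => -[E1 _]; rewrite !gconv_one in E1; by rewrite /f E1.
      by rewrite H0.
    have h_inj : injective h := can_inj hK.
    have E : #|{ffun 'I_k -> F}| = #|{ffun gT -> F}|.
      by apply/eqP; rewrite eqn_leq (leq_card _ f_inj) (leq_card _ h_inj).
    move: E; rewrite !card_ffun card_ord => /eqP.
    by rewrite eqn_exp2l ?card_finNzRing_gt1 // => /eqP.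
  rewrite Hk.
  pose dl (i : 'I_#|gT|) : {ffun gT -> S} := [ffun h => if h == enum_val i then 1 else 0].
  pose b i := (gconv (dl i) (gone gT S), gconv (dl i) d).
  have Uc (c : {ffun 'I_#|gT| -> S}) :
      [ffun h => \sum_(i < #|gT|) c i * dl i h] = [ffun h => c (enum_rank h)].
    apply/ffunP => h; rewrite !ffunE.
    transitivity (\sum_(i < #|gT|) c i * (if i == enum_rank h then 1 else 0));
      last exact: sum_delta.
    apply: eq_bigr => i _; rewrite ffunE.
    by rewrite -{1}(enum_rankK h) (inj_eq enum_val_inj) eq_sym.
  exists b; split; first by move=> i; exists (dl i).
  move=> w [u ->].
  exists [ffun i => u (enum_val i)]; split.
    rewrite (@lincomb_code _ _ _ _ b dl (gone gT S) d) // Uc.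
    suff -> : [ffun h => [ffun i => u (enum_val i)] (enum_rank h)] = u by [].
    by apply/ffunP => h; rewrite !ffunE enum_rankK.
  move=> c; rewrite (@lincomb_code _ _ _ _ b dl (gone gT S) d) // Uc !gconv_one.
  case=> E _; apply/ffunP => i; by rewrite ffunE -E ffunE enum_valK.
- split.
  + case: hdm => [[w [v [[s1 Ew] [s2 Ev] Hne Hdist]]] _].
    rewrite Ew Ev hdist_code in Hdist.
    have [g Hg] : exists g, subf s1 s2 g != 0.
      case: (pickP (fun g => subf s1 s2 g != 0)) => [g Hg | H0]; first by exists g.
      exfalso; apply: Hne; rewrite Ew Ev.
      suff -> : s1 = s2 by [].
      apply/ffunP => g; move: (H0 g) => /negbFE; rewrite ffunE subr_eq0 => /eqP //.
    pose t := liftf (subf s1 s2).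
    pose u : {ffun gT -> S} := [ffun g => a * t g].
    exists (gconv u (gone gT S), gconv u d), (gconv (zf gT S) (gone gT S), gconv (zf gT S) d).
    split.
    * by exists u.
    * by exists (zf gT S).
    * rewrite !gconv_one => -[E _].
      have : u g == 0 by rewrite E ffunE.
      rewrite ffunE; apply/negP; by rewrite Ha /t ffunE lfK.
    * rewrite hdist_code subf0 -Hdist; congr addn; apply: eq_card => h; rewrite !inE.
        by rewrite ffunE Ha /t ffunE lfK.
      rewrite /u gconv_scal Ha.
      have := congr1 (fun f : {ffun gT -> F} => f h) (redconv t); rewrite /t liftfK ffunE => ->.
      done.
  + move=> w v [u ->] [u' ->] Hne; rewrite hdist_code.
    have [x Ex0] : exists x, x = subf u u' by eexists.
    rewrite -Ex0.
    have [g1 Hg1] : exists g, x g != 0.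
      case: (pickP (fun g => x g != 0)) => [g Hg | H0]; first by exists g.
      exfalso; apply: Hne.
      suff -> : u = u' by [].
      apply/ffunP => g; move: (H0 g) => /negbFE; rewrite Ex0 ffunE subr_eq0 => /eqP //.
    case: (@arg_maxnP _ g1 (fun g => x g != 0) (fun g => #|pid (x g)|) Hg1) => g0 Hg0 Hmax.
    have Hin g : x g \in pid (x g0).
      case: (eqVneq (x g) 0) => [->|Hg].
        rewrite inE; apply/existsP; exists 0; by rewrite mul0r.
      case: (hchain _ _ (pid_ideal (x g)) (pid_ideal (x g0))) => [/subsetP H| H].
        exact: H _ (pid_self _).
      have Hle := Hmax _ Hg.
      have E : pid (x g0) == pid (x g) by rewrite eqEcard H; exact: Hle.
      by rewrite (eqP E) pid_self.
    pose c : {ffun gT -> S} :=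
      [ffun g => if g == g0 then 1 else odflt 0 [pick z | x g == z * x g0]].
    have Hc g : x g = x g0 * c g.
      rewrite ffunE; case: eqP => [-> | _]; first by rewrite mulr1.
      case: pickP => [z /eqP -> | H]; first by rewrite mulrC.
      have := Hin g; rewrite inE => /existsP[z Hz]; by have := H z; rewrite Hz.
    have Ex : x = [ffun g => x g0 * c g] by apply/ffunP => g; rewrite ffunE; exact: Hc.
    pose s := mapf red c.
    have Cs : qa_code (gone gT F) beta (gconv s (gone gT F), gconv s beta) by exists s.
    have C0 : qa_code (gone gT F) beta
        (gconv (zf gT F) (gone gT F), gconv (zf gT F) beta) by exists (zf gT F).
    have Hs0 : s g0 = 1 by rewrite ffunE ffunE eqxx rmorph1.
    have Hne' : (gconv s (gone gT F), gconv s beta) <>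
                (gconv (zf gT F) (gone gT F), gconv (zf gT F) beta).
      rewrite !gconv_one => -[E _].
      by have := congr1 (fun f : {ffun gT -> F} => f g0) E; rewrite Hs0 ffunE => /eqP; rewrite oner_eq0.
    have := hdm.2 _ _ Cs C0 Hne'; rewrite hdist_code subf0 => Hle.
    apply: (leq_trans Hle); apply: leq_add; apply: subset_leq_card; apply/subsetP => h;
      rewrite !inE.
      rewrite ffunE => Hr; rewrite Hc mulrC; apply: unit_mul_neq0 => //; exact: Hunit.
    rewrite -redconv ffunE => Hr.
    rewrite Ex gconv_scal mulrC; apply: unit_mul_neq0 => //; exact: Hunit.
Qed.
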